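(* Suppose Assumptions 1 and 2 hold and run Algorithm 1 with any $\gamma,\alpha>0$. For every $t\in\{1,2,\ldots\}$, if $$\|\mathbf{Q}(t)\|>\gamma G+\frac{\alpha R^2+2DR+2\gamma^2G^2}{\gamma\epsilon},$$ then $\|\mathbf{Q}(t+1)\|<\|\mathbf{Q}(t)\|$.
   Context: Setting: $n,m$ positive integers; $\mathcal{X}_0\subset\mathbb{R}^n$ is a nonempty compact convex set; $\mathbf{g}=(g_1,\ldots,g_m)^{\mathsf T}:\mathbb{R}^n\to\mathbb{R}^m$ with each $g_k$ convex and continuous; $f^t$, $t=0,1,2,\ldots$, are convex differentiable real functions on (a neighborhood of) $\mathcal{X}_0$. All norms are Euclidean. Assumption 1: there are constants $D,\beta,G,R>0$ with $\|\nabla f^t(\mathbf{x})\|\le D$ for all $\mathbf{x}\in\mathcal{X}_0$ and all $t\ge0$; $\|\mathbf{g}(\mathbf{x})-\mathbf{g}(\mathbf{y})\|\le\beta\|\mathbf{x}-\mathbf{y}\|$ for all $\mathbf{x},\mathbf{y}\in\mathcal{X}_0$; $\|\mathbf{g}(\mathbf{x})\|\le G$ for all $\mathbf{x}\in\mathcal{X}_0$; $\|\mathbf{x}-\mathbf{y}\|\le R$ for all $\mathbf{x},\mathbf{y}\in\mathcal{X}_0$. Assumption 2 (Slater condition): there exist $\epsilon>0$ and $\hat{\mathbf{x}}\in\mathcal{X}_0$ with $g_k(\hat{\mathbf{x}})\le-\epsilon$ for all $k\in\{1,\ldots,m\}$. Algorithm 1 (parameters $\gamma>0,\alpha>0$):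 let $\tilde{\mathbf{g}}(\mathbf{x})=\gamma\mathbf{g}(\mathbf{x})$. Choose any $\mathbf{x}(0)\in\mathcal{X}_0$ and set $Q_k(0)=0$ for all $k$. For each $t=0,1,2,\ldots$: set $Q_k(t+1)=\max\{-\tilde g_k(\mathbf{x}(t)),\,Q_k(t)+\tilde g_k(\mathbf{x}(t))\}$ for $k=1,\ldots,m$, and let $\mathbf{x}(t+1)$ be a minimizer over $\mathbf{x}\in\mathcal{X}_0$ of $[\nabla f^t(\mathbf{x}(t))]^{\mathsf T}(\mathbf{x}-\mathbf{x}(t))+[\mathbf{Q}(t+1)+\tilde{\mathbf{g}}(\mathbf{x}(t))]^{\mathsf T}\tilde{\mathbf{g}}(\mathbf{x})+\alpha\|\mathbf{x}-\mathbf{x}(t)\|^2$, where $\mathbf{Q}(t)=(Q_1(t),\ldots,Q_m(t))^{\mathsf T}$. *)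

(* Defs.v *)
(* real numbers from Stdlib Reals.
   Vectors of R^n are represented as functions nat -> R, of which only the
   components 0..n-1 are relevant (all operations below only look at those). *)
From Stdlib Require Import Reals List.
Open Scope R_scope.

Definition vec := nat -> R.

Definition sumn (n : nat) (f : nat -> R) : R :=
  fold_right Rplus 0 (map f (seq 0 n)).

Definition vadd (x y : vec) : vec := fun i => x i + y i.
Definition vsub (x y : vec) : vec := fun i => x i - y i.
Definition vscal (a : R) (x : vec) : vec := fun i => a * x i.

Definition dot (n : nat) (x y : vec) : R := sumn n (fun i => x i * y i).
Definition norm (n : nat) (x : vec) : R := sqrt (dot n x x).

Definition is_open (n : nat) (U : vec -> Prop) : Prop :=
  forall x, U x -> exists r, 0 < r /\ forall y, norm n (vsub y x) < r -> U y.
Definition is_closed (n : nat) (S : vec -> Prop) : Prop :=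
  forall x, (forall r, 0 < r -> exists y, S y /\ norm n (vsub y x) < r) -> S x.
Definition is_bounded (n : nat) (S : vec -> Prop) : Prop :=
  exists M, forall x, S x -> norm n x <= M.
(* Heine-Borel: compact subsets of R^n are the closed bounded ones *)
Definition is_compact (n : nat) (S : vec -> Prop) : Prop :=
  is_closed n S /\ is_bounded n S.
Definition convex_set (S : vec -> Prop) : Prop :=
  forall x y l, S x -> S y -> 0 <= l <= 1 ->
    S (vadd (vscal l x) (vscal (1 - l) y)).
Definition convex_fun_on (S : vec -> Prop) (f : vec -> R) : Prop :=
  forall x y l, S x -> S y -> 0 <= l <= 1 ->
    f (vadd (vscal l x) (vscal (1 - l) y)) <= l * f x + (1 - l) * f y.

Definition continuous_Rn (n : nat) (f : vec -> R) : Prop :=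
  forall x eps, 0 < eps -> exists delta, 0 < delta /\
    forall y, norm n (vsub y x) < delta -> Rabs (f y - f x) < eps.

Definition has_gradient (n : nat) (f : vec -> R) (gr : vec) (x : vec) : Prop :=
  forall eps, 0 < eps -> exists delta, 0 < delta /\
    forall y, norm n (vsub y x) < delta ->
      Rabs (f y - f x - dot n gr (vsub y x)) <= eps * norm n (vsub y x).

Definition gvec (g : nat -> vec -> R) (x : vec) : vec := fun k => g k x.

(* Objective of the x-update of Algorithm 1 at step t:
   grad^T (x - x(t)) + (Q(t+1) + gt(x(t)))^T gt(x) + alpha ||x - x(t)||^2,
   with gt = gamma * g. *)
Definition alg1_obj (n m : nat) (gamma alpha : R) (g : nat -> vec -> R)
  (grad : vec) (xt : vec) (Qnext : vec) (x : vec) : R :=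
  dot n grad (vsub x xt)
  + dot m (vadd Qnext (vscal gamma (gvec g xt))) (vscal gamma (gvec g x))
  + alpha * (norm n (vsub x xt)) ^ 2.

(* Main.v *)
Require Import Defs.
From Stdlib Require Import Reals List.
Open Scope R_scope.
From Stdlib Require Import Lra Psatz.
Lemma fold_plus_c (l : list R) c : fold_right Rplus c l = fold_right Rplus 0 l + c.
Proof. induction l; simpl; [lra| rewrite IHl; lra]. Qed.
Lemma sumn_S n f : sumn (S n) f = sumn n f + f n.
Proof.
  unfold sumn. rewrite seq_S, map_app, fold_right_app. simpl.
  rewrite fold_plus_c. lra.
Qed.

Lemma sumn_0 f : sumn 0 f = 0.
Proof. reflexivity. Qed.

Lemma sumn_ext n f g : (forall i, (i < n)%nat -> f i = g i) -> sumn n f = sumn n g.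
Proof.
  induction n; intros H; [reflexivity|].
  rewrite !sumn_S, IHn. rewrite H by lia. reflexivity.
  intros; apply H; lia.
Qed.

Lemma sumn_le n f g : (forall i, (i < n)%nat -> f i <= g i) -> sumn n f <= sumn n g.
Proof.
  induction n; intros H; [rewrite !sumn_0; lra|].
  rewrite !sumn_S. assert (f n <= g n) by (apply H; lia).
  assert (sumn n f <= sumn n g) by (apply IHn; intros; apply H; lia). lra.
Qed.

Lemma sumn_plus n f g : sumn n (fun i => f i + g i) = sumn n f + sumn n g.
Proof. induction n; [rewrite !sumn_0; lra| rewrite !sumn_S, IHn; lra]. Qed.

Lemma sumn_scal n c f : sumn n (fun i => c * f i) = c * sumn n f.
Proof. induction n; [rewrite !sumn_0; lra| rewrite !sumn_S, IHn; lra]. Qed.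

Lemma sumn_nonneg n f : (forall i, (i < n)%nat -> 0 <= f i) -> 0 <= sumn n f.
Proof.
  intros H. replace 0 with (sumn n (fun _ => 0)).
  apply sumn_le; auto. induction n; [reflexivity| rewrite sumn_S, IHn; [lra|]].
  intros; apply H; lia.
Qed.

Lemma dot_nonneg n u : 0 <= dot n u u.
Proof. apply sumn_nonneg. intros. nra. Qed.

Lemma norm_nonneg n u : 0 <= norm n u.
Proof. apply sqrt_pos. Qed.

Lemma norm_sq n u : norm n u ^ 2 = dot n u u.
Proof. unfold norm. simpl. rewrite Rmult_1_r. apply sqrt_sqrt, dot_nonneg. Qed.

Lemma dot_sub_r n u v w : dot n u (vsub v w) = dot n u v - dot n u w.
Proof.
  unfold dot, vsub.
  rewrite (sumn_ext n _ (fun i => u i * v i + (-1) * (u i * w i))) by (intros; ring).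
  rewrite sumn_plus, sumn_scal. ring.
Qed.

Lemma dot_add_l n u v w : dot n (vadd u v) w = dot n u w + dot n v w.
Proof.
  unfold dot, vadd.
  rewrite (sumn_ext n _ (fun i => u i * w i + v i * w i)) by (intros; ring).
  apply sumn_plus.
Qed.

Lemma dot_comm n u v : dot n u v = dot n v u.
Proof. unfold dot. apply sumn_ext. intros; ring. Qed.

Lemma cs_sq n u v : (dot n u v)^2 <= dot n u u * dot n v v.
Proof.
  set (uu := dot n u u). set (uv := dot n u v). set (vv := dot n v v).
  assert (Q : forall l, 0 <= uu - 2 * l * uv + l^2 * vv).
  { intros l. 
    assert (E : sumn n (fun i => (u i - l * v i) * (u i - l * v i)) = uu - 2 * l * uv + l^2 * vv).
    { rewrite (sumn_ext n _ (fun i => u i * u i + ((-2 * l) * (u i * v i) + l^2 * (v i * v i))))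
        by (intros; ring).
      rewrite !sumn_plus, !sumn_scal. unfold uu, uv, vv, dot. ring. }
    rewrite <- E. apply sumn_nonneg. intros; apply Rle_0_sqr. }
  assert (Huu : 0 <= uu) by apply dot_nonneg.
  assert (Hvv : 0 <= vv) by apply dot_nonneg.
  destruct (Req_dec vv 0) as [Hz|Hz].
  - destruct (Req_dec uv 0) as [Hz2|Hz2].
    + rewrite Hz2, Hz. lra.
    + exfalso. specialize (Q ((uu + 1) / (2 * uv))). rewrite Hz in Q.
      replace (2 * ((uu + 1) / (2 * uv)) * uv) with (uu + 1) in Q by (field; auto). lra.
  - specialize (Q (uv / vv)).
    assert (Hl : uv / vv * vv = uv) by (field; auto).
    set (l := uv / vv) in *.
    assert (0 <= (uu - 2 * l * uv + l ^ 2 * vv) * vv) by nra.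
    nra.
Qed.

Lemma cs n u v : dot n u v <= norm n u * norm n v.
Proof.
  unfold norm. rewrite <- sqrt_mult by apply dot_nonneg.
  apply Rle_trans with (Rabs (dot n u v)); [apply Rle_abs|].
  rewrite <- sqrt_Rsqr_abs. apply sqrt_le_1_alt. unfold Rsqr.
  pose proof (cs_sq n u v). simpl in H. lra.
Qed.

Lemma norm_scal n c v : norm n (vscal c v) = Rabs c * norm n v.
Proof.
  unfold norm, dot, vscal.
  rewrite (sumn_ext n _ (fun i => (c*c) * (v i * v i))) by (intros; ring).
  rewrite sumn_scal, sqrt_mult. 
  - f_equal. rewrite <- sqrt_Rsqr_abs. reflexivity.
  - nra.
  - apply dot_nonneg.
Qed.

Lemma norm_triangle n u v : norm n (vadd u v) <= norm n u + norm n v.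
Proof.
  assert (E : dot n (vadd u v) (vadd u v) = dot n u u + 2 * dot n u v + dot n v v).
  { rewrite !dot_add_l. rewrite (dot_comm n u (vadd u v)), (dot_comm n v (vadd u v)).
    rewrite !dot_add_l. rewrite (dot_comm n v u). ring. }
  pose proof (cs n u v). pose proof (norm_sq n u). pose proof (norm_sq n v).
  pose proof (norm_sq n (vadd u v)).
  pose proof (norm_nonneg n u). pose proof (norm_nonneg n v). pose proof (norm_nonneg n (vadd u v)).
  nra.
Qed.

Lemma sum_ge_norm n v : (forall i, (i < n)%nat -> 0 <= v i) -> norm n v <= sumn n v.
Proof.
  intros H.
  assert (A : 0 <= sumn n v /\ dot n v v <= sumn n v ^ 2).
  { induction n.
    - unfold dot. rewrite !sumn_0. lra.
    - destruct IHn as [A1 A2]; [intros; apply H; lia|].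
      assert (0 <= v n) by (apply H; lia).
      unfold dot in *. rewrite !sumn_S. split; nra. }
  destruct A as [A1 A2]. unfold norm.
  rewrite <- (sqrt_pow2 (sumn n v)) by auto. apply sqrt_le_1_alt. auto.
Qed.
Lemma Rabs_m1 : Rabs (-1) = 1.
Proof. unfold Rabs; destruct Rcase_abs; lra. Qed.

Theorem lemma9
  (n m : nat) (Hn : (0 < n)%nat) (Hm : (0 < m)%nat)
  (X0 : vec -> Prop)
  (HX0ne : exists x, X0 x) (HX0c : is_compact n X0) (HX0cv : convex_set X0)
  (g : nat -> vec -> R)
  (Hgconv : forall k, (k < m)%nat -> convex_fun_on (fun _ => True) (g k))
  (Hgcont : forall k, (k < m)%nat -> continuous_Rn n (g k))
  (f : nat -> vec -> R) (gradf : nat -> vec -> vec)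
  (Hfdiff : forall t, exists U, is_open n U /\ (forall x, X0 x -> U x) /\
              forall x, U x -> has_gradient n (f t) (gradf t x) x)
  (Hfconv : forall t, convex_fun_on X0 (f t))
  (* Assumption 1 *)
  (D beta G R0 : R) (HD : 0 < D) (Hbeta : 0 < beta) (HG : 0 < G) (HR : 0 < R0)
  (HgradD : forall t x, X0 x -> norm n (gradf t x) <= D)
  (Hlip : forall x y, X0 x -> X0 y ->
            norm m (vsub (gvec g x) (gvec g y)) <= beta * norm n (vsub x y))
  (HgG : forall x, X0 x -> norm m (gvec g x) <= G)
  (Hdiam : forall x y, X0 x -> X0 y -> norm n (vsub x y) <= R0)
  (* Assumption 2 (Slater) *)
  (eps : R) (Heps : 0 < eps) (xhat : vec) (Hxhat : X0 xhat)
  (Hslater : forall k, (k < m)%nat -> g k xhat <= - eps)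
  (* Algorithm 1 *)
  (gamma alpha : R) (Hgamma : 0 < gamma) (Halpha : 0 < alpha)
  (x Q : nat -> vec)
  (Hx0 : X0 (x 0%nat))
  (HQ0 : forall k, (k < m)%nat -> Q 0%nat k = 0)
  (HQ : forall t k, (k < m)%nat ->
          Q (S t) k = Rmax (- (gamma * g k (x t))) (Q t k + gamma * g k (x t)))
  (Hxin : forall t, X0 (x (S t)))
  (Hxmin : forall t z, X0 z ->
     alg1_obj n m gamma alpha g (gradf t (x t)) (x t) (Q (S t)) (x (S t))
     <= alg1_obj n m gamma alpha g (gradf t (x t)) (x t) (Q (S t)) z)
  (t : nat) (Ht : (1 <= t)%nat) :
  norm m (Q t) > gamma * G
    + (alpha * R0 ^ 2 + 2 * D * R0 + 2 * gamma ^ 2 * G ^ 2) / (gamma * eps) ->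
  norm m (Q (S t)) < norm m (Q t).
Proof.
  intros Hgt. destruct t as [|s]; [lia|]. clear Ht.
  assert (Qnn : forall t k, (k < m)%nat -> 0 <= Q t k).
  { induction t; intros k Hk. rewrite HQ0 by auto; lra.
    rewrite HQ by auto. pose proof (IHt k Hk).
    pose proof (Rmax_l (- (gamma * g k (x t))) (Q t k + gamma * g k (x t))).
    pose proof (Rmax_r (- (gamma * g k (x t))) (Q t k + gamma * g k (x t))). lra. }
  assert (Xs : X0 (x s)) by (destruct s; auto).
  set (qt := Q (S s)).
  set (b := vscal gamma (gvec g (x s))).
  set (a := vscal gamma (gvec g (x (S s)))).
  set (gh := vscal gamma (gvec g xhat)).
  assert (Drift : dot m (Q (S (S s))) (Q (S (S s))) <= dot m qt qt + 2 * dot m qt a + 2 * dot m a a).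
  { apply Rle_trans with (sumn m (fun k => qt k * qt k + (2 * (qt k * a k) + 2 * (a k * a k)))).
    - unfold dot. apply sumn_le. intros k Hk. rewrite (HQ (S s) k Hk).
      pose proof (Qnn (S s) k Hk). fold qt in H |- *. unfold a, vscal, gvec.
      set (aa := gamma * g k (x (S s))). unfold Rmax. pose proof (Rle_0_sqr (qt k + aa)); unfold Rsqr in *; destruct Rle_dec; nra.
    - rewrite !sumn_plus, !sumn_scal. unfold dot; lra. }
  pose proof (Hxmin s xhat Hxhat) as Hmin. unfold alg1_obj in Hmin.
  fold qt b a gh in Hmin.
  rewrite !dot_sub_r in Hmin.
  set (gr := gradf s (x s)) in Hmin.
  assert (F1 : dot n gr xhat - dot n gr (x (S s)) <= D * R0).
  { rewrite <- dot_sub_r. pose proof (cs n gr (vsub xhat (x (S s)))).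
    pose proof (HgradD s (x s) Xs). pose proof (Hdiam xhat (x (S s)) Hxhat (Hxin s)).
    pose proof (norm_nonneg n gr). pose proof (norm_nonneg n (vsub xhat (x (S s)))).
    fold gr in H0. nra. }
  assert (F2a : 0 <= alpha * norm n (vsub (x (S s)) (x s)) ^ 2).
  { pose proof (norm_nonneg n (vsub (x (S s)) (x s))). nra. }
  assert (F2b : alpha * norm n (vsub xhat (x s)) ^ 2 <= alpha * R0 ^ 2).
  { pose proof (norm_nonneg n (vsub xhat (x s))). pose proof (Hdiam xhat (x s) Hxhat Xs).
    apply Rmult_le_compat_l; [lra|]. nra. }
  assert (Pnn : forall k, (k < m)%nat -> 0 <= vadd qt b k).
  { intros k Hk. unfold vadd, qt, b, vscal, gvec. rewrite HQ by auto.
    pose proof (Rmax_l (- (gamma * g k (x s))) (Q s k + gamma * g k (x s))). lra. }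
  assert (F3 : dot m (vadd qt b) gh <= - (gamma * eps) * sumn m (vadd qt b)).
  { rewrite <- sumn_scal. unfold dot. apply sumn_le. intros k Hk.
    pose proof (Pnn k Hk). pose proof (Hslater k Hk). unfold gh, vscal, gvec.
    set (p := vadd qt b k) in *.
    assert (h : gamma * g k xhat <= gamma * (- eps)) by (apply Rmult_le_compat_l; lra).
    pose proof (Rmult_le_compat_l p _ _ H h). lra. }
  assert (Hnb : norm m b <= gamma * G).
  { unfold b. rewrite norm_scal, Rabs_pos_eq by lra. pose proof (HgG (x s) Xs).
    apply Rmult_le_compat_l; lra. }
  assert (Hna : norm m a <= gamma * G).
  { unfold a. rewrite norm_scal, Rabs_pos_eq by lra. pose proof (HgG (x (S s)) (Hxin s)).
    apply Rmult_le_compat_l; lra. }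
  assert (F4 : norm m qt - gamma * G <= sumn m (vadd qt b)).
  { pose proof (sum_ge_norm m (vadd qt b) Pnn).
    assert (E : norm m qt = norm m (vadd (vadd qt b) (vscal (-1) b))).
    { unfold norm, dot. f_equal. apply sumn_ext. intros; unfold vadd, vscal; ring. }
    pose proof (norm_triangle m (vadd qt b) (vscal (-1) b)) as Tr.
    rewrite norm_scal in Tr. rewrite Rabs_m1 in Tr. lra. }
  assert (F5 : dot m a a <= (gamma * G) ^ 2).
  { rewrite <- norm_sq. pose proof (norm_nonneg m a). nra. }
  assert (F6 : - dot m b a <= (gamma * G) ^ 2).
  { assert (E : - dot m b a = dot m (vscal (-1) b) a).
    { unfold dot, vscal. rewrite (sumn_ext m (fun i => -1 * b i * a i) (fun i => -1 * (b i * a i)))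
        by (intros; ring). rewrite sumn_scal. ring. }
    rewrite E. pose proof (cs m (vscal (-1) b) a) as Cs. rewrite norm_scal, Rabs_m1 in Cs.
    pose proof (norm_nonneg m a). pose proof (norm_nonneg m b). nra. }
  assert (Ea : dot m qt a = dot m (vadd qt b) a - dot m b a) by (rewrite dot_add_l; ring).
  fold qt in Hgt.
  set (N := norm m qt) in *.
  set (C := alpha * R0 ^ 2 + 2 * D * R0 + 2 * gamma ^ 2 * G ^ 2) in *.
  assert (HK : C / (gamma * eps) * (gamma * eps) = C) by (field; lra).
  set (K := C / (gamma * eps)) in *.
  assert (Hge : 0 < gamma * eps) by nra.
  assert (Hbig : gamma * eps * (N - gamma * G) > C).
  { pose proof (Rmult_lt_compat_l (gamma * eps) K (N - gamma * G) Hge ltac:(lra)).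
    rewrite (Rmult_comm (gamma * eps) K), HK in H. lra. }
  assert (Hsum : 0 <= sumn m (vadd qt b)) by (apply sumn_nonneg; auto).
  assert (Hlt : dot m qt a + dot m a a < 0).
  { assert (gamma * eps * (N - gamma * G) <= gamma * eps * sumn m (vadd qt b))
      by (apply Rmult_le_compat_l; lra).
    assert (0 < D * R0) by nra. unfold C in Hbig. lra. }
  unfold norm at 1. fold N. unfold N, norm. apply sqrt_lt_1_alt. split.
  apply dot_nonneg. lra.
Qed.
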